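(* Let $\mathcal I'$ be an SMI instance and $a$ an agent of $\mathcal I'$. Then there is at most one agent $a'$ with $a'\notin \mathrm{ma}(\mathcal I')$ and $a'\in\mathrm{ma}(\mathcal I'\setminus\{a\})$.
   Context: In a Stable Marriage with Incomplete Lists (SMI) instance there are men $U$ and women $W$, and each agent has a strict preference list over a subset of the agents of opposite gender; $m,w$ are mutually acceptable if each appears in the other's list. A matching is a set of mutually acceptable man–woman pairs in which each agent appears at most once. A mutually acceptable pair $\{m,w\}$ blocks a matching $M$ if ($m$ is unassigned or prefers $w$ to his partner) and ($w$ is unassigned or prefers $m$ to her partner); $M$ is stable if no pair blocks it. By the Rural Hospitals Theorem all stable matchings of an SMI instance assign the same set of agents; $\mathrm{ma}(\mathcal I)$ denotes this set of agents matched in the stable matchings of $\mathcal I$. $\mathcal I'\setminus\{a\}$ is the SMI instance obtained by deleting agent $a$ (and removing it from all lists). *)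

(* Defs.v *)
From mathcomp Require Import all_boot.
Set Implicit Arguments. Unset Strict Implicit. Unset Printing Implicit Defensive.

(* An SMI instance over men U and women W: each man has a strict preference
   list (a duplicate-free sequence, most preferred first) over a subset of W,
   and each woman one over a subset of U. *)
Record SMI (U W : finType) := mkSMI {
  mpref : U -> seq W;
  wpref : W -> seq U
}.

Section SMIDefs.
Variables (U W : finType).
Implicit Types (I : SMI U W) (m : U) (w : W).

Definition wf_SMI I : Prop :=
  (forall m, uniq (mpref I m)) /\ (forall w, uniq (wpref I w)).

Definition agent := (U + W)%type.

Definition acceptable I m w : bool := (w \in mpref I m) && (m \in wpref I w).

Definition mprefers I m w1 w2 : bool := index w1 (mpref I m) < index w2 (mpref I m).
Definition wprefers I w m1 m2 : bool := index m1 (wpref I w) < index m2 (wpref I w).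

Definition is_matching I (M : {set U * W}) : Prop :=
  (forall p, p \in M -> acceptable I p.1 p.2) /\
  (forall m w1 w2, (m, w1) \in M -> (m, w2) \in M -> w1 = w2) /\
  (forall w m1 m2, (m1, w) \in M -> (m2, w) \in M -> m1 = m2).

Definition man_matched (M : {set U * W}) m : Prop := exists w, (m, w) \in M.
Definition woman_matched (M : {set U * W}) w : Prop := exists m, (m, w) \in M.

Definition blocks I (M : {set U * W}) m w : Prop :=
  acceptable I m w /\
  (~ man_matched M m \/ exists w', (m, w') \in M /\ mprefers I m w w') /\
  (~ woman_matched M w \/ exists m', (m', w) \in M /\ wprefers I w m m').

Definition stable I (M : {set U * W}) : Prop :=
  is_matching I M /\ forall m w, ~ blocks I M m w.

Definition agent_matched (M : {set U * W}) (x : agent) : Prop :=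
  match x with inl m => man_matched M m | inr w => woman_matched M w end.

(* ma(I): agents matched in the stable matchings of I (by the Rural Hospitals
   Theorem, equivalently in some / in every stable matching). *)
Definition ma I (x : agent) : Prop :=
  exists M, stable I M /\ agent_matched M x.

(* The deleted agent is
   kept in the carrier type but with an empty list and appearing in no list,
   so it is in no matching (equivalent to being absent). *)
Definition del_agent I (a : agent) : SMI U W :=
  match a with
  | inl m0 => mkSMI (fun m => if m == m0 then [::] else mpref I m)
                    (fun w => filter (predC1 m0) (wpref I w))
  | inr w0 => mkSMI (fun m => filter (predC1 w0) (mpref I m))
                    (fun w => if w == w0 then [::] else wpref I w)
  end.

End SMIDefs.

(* Main.v *)
Require Import Defs.
From mathcomp Require Import all_boot zify.
Set Implicit Arguments. Unset Strict Implicit. Unset Printing Implicit Defensive.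

Section Walk.
Variables (T : finType) (side : T -> bool) (P1 P2 : T -> option T).
Hypothesis P1sym : forall x y, P1 x = Some y -> P1 y = Some x.
Hypothesis P2sym : forall x y, P2 x = Some y -> P2 y = Some x.
Hypothesis P1side : forall x y, P1 x = Some y -> side y = ~~ side x.
Hypothesis P2side : forall x y, P2 x = Some y -> side y = ~~ side x.

Definition sel q := if odd q then P2 else P1.

Fixpoint walk (x0 : T) (q : nat) : T :=
  match q with 0 => x0 | q'.+1 => odflt (walk x0 q') (sel q'.+1 (walk x0 q')) end.

Lemma walk0 x0 : walk x0 0 = x0. Proof. by []. Qed.
Lemma walkS x0 q : walk x0 q.+1 = odflt (walk x0 q) (sel q.+1 (walk x0 q)).
Proof. by []. Qed.
Arguments walk : simpl never.

Definition valid x0 n := forall q, q < n -> sel q.+1 (walk x0 q) = Some (walk x0 q.+1).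

Lemma valid_ext x0 n z : valid x0 n -> sel n.+1 (walk x0 n) = Some z ->
  valid x0 n.+1 /\ walk x0 n.+1 = z.
Proof.
move=> V E; have wz : walk x0 n.+1 = z by rewrite walkS E.
split=> // q; rewrite ltnS leq_eqVlt => /orP[/eqP->|qn]; first by rewrite E wz.
exact: V.
Qed.

Lemma selsym q x y : sel q x = Some y -> sel q y = Some x.
Proof. rewrite /sel; case: ifP => _; [exact: P2sym|exact: P1sym]. Qed.

Lemma selside q x y : sel q x = Some y -> side y = ~~ side x.
Proof. rewrite /sel; case: ifP => _; [exact: P2side|exact: P1side]. Qed.

Lemma sel_even q : ~~ odd q -> sel q = P1.
Proof. by rewrite /sel => /negbTE ->. Qed.
Lemma sel_odd q : odd q -> sel q = P2.
Proof. by rewrite /sel => ->. Qed.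

Lemma back x0 n q : valid x0 n -> q < n -> sel q.+1 (walk x0 q.+1) = Some (walk x0 q).
Proof. move=> V qn; exact: selsym (V q qn). Qed.

Lemma walk_side x0 n q : valid x0 n -> q <= n -> side (walk x0 q) = side x0 (+) odd q.
Proof.
move=> V; elim: q => [|q IH] qn; first by rewrite addbF walk0.
by rewrite (selside (V q qn)) IH ?(ltnW qn) //= addbN.
Qed.

Lemma walk_par x0 n i j : valid x0 n -> i <= n -> j <= n -> walk x0 i = walk x0 j -> odd i = odd j.
Proof.
move=> V i_n j_n E; have := walk_side V i_n; have := walk_side V j_n; rewrite E => ->.
by case: (side x0); case: (odd i); case: (odd j).
Qed.

Lemma walk_inj x0 n : valid x0 n -> P1 x0 = None ->
  forall i j, i < j -> j <= n -> walk x0 i = walk x0 j -> False.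
Proof.
move=> V H0; elim=> [|i IH] [|j] // ij jn E.
- have po := walk_par V (leq0n n) jn E.
  have := back V jn; rewrite -E walk0 /sel -po /=.
  by rewrite H0.
- have po := walk_par V (_ : i.+1 <= n) (_ : j.+1 <= n) E; have {}po := po ltac:(lia) ltac:(lia).
  have Hi := back V (_ : i < n); have {}Hi := Hi ltac:(lia); have Hj := back V jn.
  rewrite /sel po E in Hi; rewrite /sel in Hj; rewrite Hj in Hi; case: Hi => Hi.
  exact: (IH j ij (ltnW jn) (esym Hi)).
Qed.

Lemma walk_bound x0 n : valid x0 n -> P1 x0 = None -> n < #|T|.
Proof.
move=> V H0.
pose f (i : 'I_n.+1) := walk x0 i.
have fi : injective f.
  move=> i j E; apply/val_inj => /=.
  case: (ltngtP i j) => // ij; exfalso.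
  - exact: (walk_inj V H0 ij (leq_ord j) E).
  - exact: (walk_inj V H0 ij (leq_ord i) (esym E)).
by have := leq_card _ fi; rewrite card_ord.
Qed.

Lemma walk_uniq_aux x1 x2 k1 k2 : k1 <= k2 -> valid x1 k1 -> valid x2 k2 ->
  ~~ odd k1 -> ~~ odd k2 ->
  walk x1 k1 = walk x2 k2 -> P1 x1 = None -> x1 = x2.
Proof.
move=> le V1 V2 o1 o2 E N1.
have key : forall t, t <= k1 -> walk x1 (k1 - t) = walk x2 (k2 - t).
  elim=> [|t IH] tk; first by rewrite !subn0.
  have IH' := IH (ltnW tk).
  have e1 : k1 - t = (k1 - t.+1).+1 by lia.
  have e2 : k2 - t = (k2 - t.+1).+1 by lia.
  have h1 := back V1 (_ : k1 - t.+1 < k1).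
  have h2 := back V2 (_ : k2 - t.+1 < k2).
  have {}h1 := h1 ltac:(lia). have {}h2 := h2 ltac:(lia).
  rewrite -e1 IH' in h1; rewrite -e2 in h2.
  have ps : odd (k1 - t) = odd (k2 - t).
    by rewrite !oddB ?(negbTE o1) ?(negbTE o2) //; lia.
  rewrite /sel ps in h1; rewrite /sel in h2; by rewrite h2 in h1; case: h1.
have := key k1 (leqnn _); rewrite subnn walk0 => ->.
case: (ltngtP k1 k2) le => // [lt|eq] _; last by rewrite eq subnn walk0.
exfalso.
have h := back V2 (_ : (k2 - k1).-1 < k2); have {}h := h ltac:(lia).
have e : ((k2 - k1).-1).+1 = k2 - k1 by lia.
rewrite e sel_even in h; last by rewrite oddB ?(negbTE o1) ?(negbTE o2) //; lia.
by rewrite -(key k1 (leqnn _)) subnn walk0 N1 in h.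
Qed.

Lemma walk_uniq x1 x2 k1 k2 d : valid x1 k1 -> valid x2 k2 -> ~~ odd k1 -> ~~ odd k2 ->
  walk x1 k1 = d -> walk x2 k2 = d -> P1 x1 = None -> P1 x2 = None -> x1 = x2.
Proof.
move=> V1 V2 o1 o2 E1 E2 N1 N2.
case: (leqP k1 k2) => le.
- by apply: (walk_uniq_aux le V1 V2 o1 o2) => //; rewrite E1 E2.
- by apply/esym; apply: (walk_uniq_aux (ltnW le) V2 V1 o2 o1) => //; rewrite E1 E2.
Qed.
End Walk.
Arguments walk : simpl never.

Section Lists.
Variable T : eqType.
Definition accL (L : T -> seq T) x y := (y \in L x) && (x \in L y).
Definition prefL (L : T -> seq T) x y z := index y (L x) < index z (L x).
Definition want (L : T -> seq T) (P : T -> option T) x y :=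
  P x = None \/ exists z, P x = Some z /\ prefL L x y z.
Definition SA (L : T -> seq T) (P : T -> option T) :=
  [/\ (forall x y, P x = Some y -> P y = Some x),
      (forall x y, P x = Some y -> accL L x y) &
      (forall x y, accL L x y -> want L P x y -> want L P y x -> False)].

Lemma index_filter_lt (p : pred T) (s : seq T) (u v : T) : p u -> p v ->
  (index u (filter p s) < index v (filter p s)) = (index u s < index v s).
Proof.
move=> pu pv; elim: s => [|y s IH] //=.
case: ifP => py /=.
- rewrite /index /= -/(index u s) -/(index v s) -/(index u _) -/(index v _).
  by case: (y == u); case: (y == v) => //=; rewrite ltnS IH.
- have yu : (y == u) = false by apply/negbTE; apply: contraFneq py => ->.
  have yv : (y == v) = false by apply/negbTE; apply: contraFneq py => ->.
  by rewrite /index /= yu yv ltnS.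
Qed.

Lemma pref_total L x u v : u \in L x -> v \in L x -> u != v -> ~~ prefL L x u v -> prefL L x v u.
Proof.
rewrite /prefL => uL vL uv; rewrite -leqNgt leq_eqVlt => /orP[/eqP E|//].
by move: uv; rewrite -(nth_index u uL) -(nth_index u vL) E eqxx.
Qed.
End Lists.

Section Chain.
Variables (T : finType) (side : T -> bool) (L1 L2 : T -> seq T) (P1 P2 : T -> option T) (a : T).
Hypothesis SA1 : SA L1 P1.
Hypothesis SA2 : SA L2 P2.
Hypothesis HL : forall x, L2 x = if x == a then [::] else filter (predC1 a) (L1 x).
Hypothesis L1side : forall x y, y \in L1 x -> side y = ~~ side x.

Lemma mem21 x y : y \in L2 x -> [/\ y \in L1 x, y != a & x != a].
Proof. by rewrite HL; case: eqP => // /eqP xa; rewrite mem_filter => /andP[ya yL]. Qed.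

Lemma mem12 x y : y \in L1 x -> y != a -> x != a -> y \in L2 x.
Proof. by move=> yL ya /negbTE xa; rewrite HL xa mem_filter /= ya yL. Qed.

Lemma acc21 x y : accL L2 x y -> accL L1 x y.
Proof. by case/andP=> /mem21[h1 _ _] /mem21[h2 _ _]; apply/andP. Qed.

Lemma acc12 x y : x != a -> y != a -> accL L1 x y -> accL L2 x y.
Proof. by move=> xa ya /andP[h1 h2]; apply/andP; split; apply: mem12. Qed.

Lemma pref12 x y z : x != a -> y != a -> z != a -> prefL L2 x y z = prefL L1 x y z.
Proof.
move=> /negbTE xa ya za; rewrite /prefL HL xa.
by apply: index_filter_lt.
Qed.

Let P1sym := let: And3 h _ _ := SA1 in h.
Let P2sym := let: And3 h _ _ := SA2 in h.
Let P1acc := let: And3 _ h _ := SA1 in h.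
Let P2acc := let: And3 _ h _ := SA2 in h.
Let P1bl := let: And3 _ _ h := SA1 in h.
Let P2bl := let: And3 _ _ h := SA2 in h.

Lemma P1side x y : P1 x = Some y -> side y = ~~ side x.
Proof. by move/P1acc/andP=> [/L1side]. Qed.
Lemma P2side x y : P2 x = Some y -> side y = ~~ side x.
Proof. by move/P2acc/andP=> [/mem21[/L1side]]. Qed.

Lemma P2a x y : P2 x = Some y -> x != a /\ y != a.
Proof. by move/P2acc/andP=> [/mem21[_ ? ?] _]. Qed.

Variable x0 : T.
Hypothesis N0 : P1 x0 = None.
Hypothesis S0 : P2 x0 <> None.

Notation w := (walk P1 P2 x0).
Notation V := (valid P1 P2 x0).

Definition Einv p := [/\ V p.+1, ~~ odd p & want L1 P1 (w p) (w p.+1)].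

Lemma step p : Einv p -> Einv p.+2 \/ (V p.+2 /\ w p.+2 = a).
Proof.
case=> Vp op wp.
have Pxy : P2 (w p) = Some (w p.+1).
  by have := Vp p (ltnSn _); rewrite sel_odd //= op.
have [xa ya] := P2a Pxy.
have acc1 := acc21 (P2acc Pxy).
have b1 := P1bl acc1 wp.
case Py: (P1 (w p.+1)) => [z|]; last by exfalso; apply: b1; left.
have zL : z \in L1 (w p.+1) by case/andP: (P1acc Py).
have xL : w p \in L1 (w p.+1) by case/andP: acc1.
have zx : z != w p.
  apply/eqP=> E; subst z; case: wp => [|[z' [Px pz]]]; first by rewrite (P1sym Py).
  by rewrite (P1sym Py) in Px; case: Px => E; rewrite -E /prefL ltnn in pz.
have pz : prefL L1 (w p.+1) z (w p).
  apply: pref_total; rewrite 1?eq_sym //; apply/negP => h; apply: b1; right; exists z; split=> //.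
have sz : sel P1 P2 p.+2 (w p.+1) = Some z by rewrite sel_even //= negbK.
have [Vp2 wz] := valid_ext Vp sz.
case: (eqVneq z a) => [za|za]; first by right; rewrite wz.
left.
have acc2 : accL L2 (w p.+1) z by apply: acc12 => //; apply: P1acc.
have want2 : want L2 P2 (w p.+1) z.
  by right; exists (w p); split; [exact: P2sym|rewrite pref12].
have b2 := P2bl acc2 want2.
case Pz: (P2 z) => [u|]; last by exfalso; apply: b2; left.
have uL : u \in L2 z by case/andP: (P2acc Pz).
have yL : w p.+1 \in L2 z by case/andP: acc2.
have uy : u != w p.+1.
  apply/eqP=> E; subst u; have := P2sym Pz; rewrite (P2sym Pxy) => -[E].
  by rewrite E eqxx in zx.
have pu : prefL L2 z u (w p.+1).
  apply: pref_total; rewrite 1?eq_sym //; apply/negP => h; apply: b2; right; exists u; split=> //.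
have [_ ua _] := mem21 uL.
rewrite pref12 // in pu.
have su : sel P1 P2 p.+3 (w p.+2) = Some u by rewrite sel_odd ?wz //= negbK.
have [Vp3 wu] := valid_ext Vp2 su.
split=> //=; first by rewrite negbK.
right; exists (w p.+1); split; first by rewrite wz; exact: P1sym.
by rewrite wz wu.
Qed.

Lemma chain : exists k, [/\ V k, ~~ odd k & w k = a].
Proof.
have E0 : Einv 0.
  case P0: (P2 x0) S0 => [y|] // _.
  have s1 : sel P1 P2 1 (w 0) = Some y by rewrite sel_odd //= walk0.
  have V0 : V 0 by [].
  have [V1 _] := valid_ext V0 s1.
  by split=> //; left; rewrite walk0.
have it : forall i, Einv i.*2 \/ exists k, [/\ V k, ~~ odd k & w k = a].
  elim=> [|i [Ei|H]]; [by left| |by right].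
  case: (step Ei) => [h|[Vk wk]]; [by left; rewrite doubleS | right].
  by exists (i.*2).+2; split=> //=; rewrite negbK odd_double.
case: (it #|T|) => [[Vn _ _]|//].
have := walk_bound (@P1sym) (@P2sym) (@P1side) (@P2side) Vn N0.
lia.
Qed.
End Chain.

Section SMIlayer.
Variables (U W : finType).
Notation A := (U + W)%type.

Definition side (x : A) : bool := if x is inl _ then true else false.
Definition prefl (I : SMI U W) (x : A) : seq A :=
  match x with inl m => map inr (mpref I m) | inr w => map inl (wpref I w) end.

Lemma inl_inj' : injective (@inl U W). Proof. by move=> ? ? []. Qed.
Lemma inr_inj' : injective (@inr U W). Proof. by move=> ? ? []. Qed.

Lemma eq_inl (m m0 : U) : (inl m == inl m0 :> A) = (m == m0).
Proof. by apply/eqP/eqP => [[]|->]. Qed.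
Lemma eq_inr (m m0 : W) : (inr m == inr m0 :> A) = (m == m0).
Proof. by apply/eqP/eqP => [[]|->]. Qed.
Lemma eq_lr (m : U) (w : W) : (inl m == inr w :> A) = false.
Proof. by apply/eqP. Qed.
Lemma eq_rl (m : U) (w : W) : (inr w == inl m :> A) = false.
Proof. by apply/eqP. Qed.

Lemma prefl_side I (x y : A) : y \in prefl I x -> side y = ~~ side x.
Proof. by case: x => [m|w] /mapP[z _ ->]. Qed.

Lemma accL_mw I m w : accL (prefl I) (inl m) (inr w) = acceptable I m w.
Proof. by rewrite /accL /= (mem_map inr_inj') (mem_map inl_inj'). Qed.
Lemma accL_wm I m w : accL (prefl I) (inr w) (inl m) = acceptable I m w.
Proof. by rewrite /accL /= (mem_map inr_inj') (mem_map inl_inj') andbC. Qed.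
Lemma mem_lr (m : U) (s : seq W) : (inl m \in map (@inr U W) s) = false.
Proof. by apply/negP => /mapP[]. Qed.
Lemma mem_rl (w : W) (s : seq U) : (inr w \in map (@inl U W) s) = false.
Proof. by apply/negP => /mapP[]. Qed.
Lemma accL_mm I (m m' : U) : accL (prefl I) (inl m) (inl m') = false.
Proof. by rewrite /accL /= mem_lr. Qed.
Lemma accL_ww I (w w' : W) : accL (prefl I) (inr w) (inr w') = false.
Proof. by rewrite /accL /= mem_rl. Qed.

Definition partner (M : {set U * W}) (x : A) : option A :=
  match x with
  | inl m => omap inr [pick w | (m, w) \in M]
  | inr w => omap inl [pick m | (m, w) \in M]
  end.

Section M.
Variables (I : SMI U W) (M : {set U * W}).
Hypothesis HM : is_matching I M.

Lemma partnerL m w : (m, w) \in M -> partner M (inl m) = Some (inr w).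
Proof.
case: HM => _ [Hu _] Mw /=; case: pickP => [w' Hw'|H]; first by rewrite (Hu _ _ _ Hw' Mw).
by rewrite H in Mw.
Qed.

Lemma partnerR m w : (m, w) \in M -> partner M (inr w) = Some (inl m).
Proof.
case: HM => _ [_ Hu] Mw /=; case: pickP => [m' Hm'|H]; first by rewrite (Hu _ _ _ Hm' Mw).
by rewrite H in Mw.
Qed.

Lemma partner_spec x y : partner M x = Some y -> exists m w, (m, w) \in M /\
  ((x = inl m /\ y = inr w) \/ (x = inr w /\ y = inl m)).
Proof.
case: x => [m|w] /=; case: pickP => // z Hz [<-].
- by exists m, z; split=> //; left.
- by exists z, w; split=> //; right.
Qed.

Lemma matched_partner x : agent_matched M x <-> partner M x <> None.
Proof.
split.
- by case: x => [m [w /partnerL->]|w [m /partnerR->]].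
- case E: (partner M x) => [y|] // _; have [m [w [Mw [[-> _]|[-> _]]]]] := partner_spec E.
  + by exists w.
  + by exists m.
Qed.

Lemma want_m m w : want (prefl I) (partner M) (inl m) (inr w) ->
  ~ man_matched M m \/ exists w', (m, w') \in M /\ mprefers I m w w'.
Proof.
case=> [h|[z [h p]]].
- by left => -[w' /partnerL]; rewrite h.
- right; have [m1 [w1 [Mw [[[e] ez]|[//]]]]] := partner_spec h; subst m1 z.
  by exists w1; split=> //; move: p; rewrite /prefL /= !(index_map inr_inj').
Qed.

Lemma want_w m w : want (prefl I) (partner M) (inr w) (inl m) ->
  ~ woman_matched M w \/ exists m', (m', w) \in M /\ wprefers I w m m'.
Proof.
case=> [h|[z [h p]]].
- by left => -[m' /partnerR]; rewrite h.
- right; have [m1 [w1 [Mw [[//]|[[e] ez]]]]] := partner_spec h; subst w1 z.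
  by exists m1; split=> //; move: p; rewrite /prefL /= !(index_map inl_inj').
Qed.

Lemma SA_stable : (forall m w, ~ blocks I M m w) -> SA (prefl I) (partner M).
Proof.
move=> nb; split.
- move=> x y /partner_spec [m [w [Mw [[-> ->]|[-> ->]]]]].
  + exact: partnerR.
  + exact: partnerL.
- move=> x y /partner_spec [m [w [Mw [[-> ->]|[-> ->]]]]].
  + by rewrite accL_mw; case: HM => /(_ _ Mw).
  + by rewrite accL_wm; case: HM => /(_ _ Mw).
- case=> [m|w] [m'|w'] //; rewrite ?accL_mm ?accL_ww ?accL_mw ?accL_wm //.
  + by move=> ac h1 h2; apply: (nb m w'); split=> //; split; [exact: want_m|exact: want_w].
  + by move=> ac h1 h2; apply: (nb m' w); split=> //; split; [exact: want_m|exact: want_w].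
Qed.
End M.

Lemma prefl_del I (a x : A) :
  prefl (del_agent I a) x = if x == a then [::] else filter (predC1 a) (prefl I x).
Proof.
case: a => [m0|w0]; case: x => [m|w] /=; rewrite ?eq_inl ?eq_inr ?eq_lr ?eq_rl.
- case: eqP => // _; rewrite filter_map; congr map.
  by apply/esym/all_filterP/allP => y _.
- by rewrite filter_map; congr map; apply: eq_filter => y /=; rewrite eq_inl.
- by rewrite filter_map; congr map; apply: eq_filter => y /=; rewrite eq_inr.
- case: eqP => // _; rewrite filter_map; congr map.
  by apply/esym/all_filterP/allP => y _.
Qed.

Lemma prefl_del2 I (a x : A) : let J := del_agent I a in
  prefl J x = if x == a then [::] else filter (predC1 a) (prefl J x).
Proof.
move=> J; rewrite /J (prefl_del I a x); case: eqP => // _.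
by rewrite filter_id.
Qed.

End SMIlayer.

Lemma idx_inj (T : eqType) (s : seq T) x y : x \in s -> y \in s -> index x s = index y s -> x = y.
Proof. by move=> hx hy e; rewrite -(nth_index x hx) -(nth_index x hy) e. Qed.

Section GS.
Variables (U W : finType) (I : SMI U W).
Hypothesis wf : wf_SMI I.
Implicit Type k : U -> nat.

Definition proposes k m w := (w \in mpref I m) && (index w (mpref I m) == k m).
Definition Inv k := forall m w, w \in mpref I m -> index w (mpref I m) < k m -> m \in wpref I w ->
  exists m', proposes k m' w /\ index m' (wpref I w) < index m (wpref I w).
Definition rejw k r w := proposes k r w && ((r \notin wpref I w) ||
  [exists p, proposes k p w && (index p (wpref I w) < index r (wpref I w))]).
Definition mu k := \sum_(m : U) (size (mpref I m) - k m).
Definition kupd k r := fun m => if m == r then (k m).+1 else k m.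

Lemma prop_uniq k m w1 w2 : proposes k m w1 -> proposes k m w2 -> w1 = w2.
Proof. by case/andP=> h1 /eqP e1 /andP[h2 /eqP e2]; apply: (idx_inj h1 h2); rewrite e1 e2. Qed.

Lemma step_inv k r w0 : Inv k -> rejw k r w0 -> Inv (kupd k r).
Proof.
move=> Hk /andP[pr rj].
have pk' : forall p w, p != r -> proposes k p w -> proposes (kupd k r) p w.
  by move=> p w' /negbTE pr' /andP[h1 h2]; rewrite /proposes /kupd pr' h1.
have rj' : r \in wpref I w0 -> exists2 p, proposes k p w0 & index p (wpref I w0) < index r (wpref I w0).
  move=> rin; case/orP: rj => [/negP//|/existsP[p /andP[h1 h2]]].
  by exists p.
have pne : forall p w, index p (wpref I w) < index r (wpref I w) -> p != r.
  by move=> p w lt; apply/eqP => e; rewrite e ltnn in lt.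
move=> m w wm.
have key : forall m', proposes k m' w -> index m' (wpref I w) < index m (wpref I w) ->
    exists m'', proposes (kupd k r) m'' w /\ index m'' (wpref I w) < index m (wpref I w).
  move=> m' pm' lt; case: (eqVneq m' r) => [e|ne]; last by exists m'; split=> //; apply: pk'.
  subst m'; have ew := prop_uniq pm' pr; subst w.
  have rin : r \in wpref I w0 by rewrite -index_mem (leq_trans lt (index_size _ _)).
  have [p pp lp] := rj' rin.
  exists p; split; [apply: pk' => //; exact: pne lp | exact: ltn_trans lp lt].
rewrite /kupd; case: (eqVneq m r) => [e|ne] lt mw.
- subst m; rewrite ltnS leq_eqVlt in lt; case/orP: lt => [/eqP e|lt].
  + have pw : proposes k r w by rewrite /proposes wm e eqxx.
    have ew := prop_uniq pw pr; subst w.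
    have [p pp lp] := rj' mw.
    by exists p; split=> //; apply: pk' => //; exact: pne lp.
  + have [m' [pm' l']] := Hk _ _ wm lt mw; exact: (key m' pm' l').
- have [m' [pm' l']] := Hk _ _ wm lt mw; exact: (key m' pm' l').
Qed.

Lemma mu_step k r w0 : proposes k r w0 -> mu (kupd k r) < mu k.
Proof.
case/andP=> wr /eqP e.
have lt : k r < size (mpref I r) by rewrite -e index_mem.
have E : \sum_(m | m != r) (size (mpref I m) - kupd k r m) =
         \sum_(m | m != r) (size (mpref I m) - k m).
  by apply: eq_bigr => m /negbTE h; rewrite /kupd h.
rewrite /mu (bigD1 r) // [X in _ < X](bigD1 r) //= E /kupd eqxx.
rewrite ltn_add2r; lia.
Qed.

Lemma final k : Inv k -> (forall r w, ~~ rejw k r w) ->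
  stable I [set p | proposes k p.1 p.2].
Proof.
move=> Hk Hn; set M := [set p | _].
have inM : forall m w, ((m, w) \in M) = proposes k m w by move=> m w; rewrite inE.
have nr : forall m w, proposes k m w -> m \in wpref I w /\
    forall p, proposes k p w -> ~~ (index p (wpref I w) < index m (wpref I w)).
  move=> m w pm; have := Hn m w; rewrite /rejw pm /= negb_or negbK => /andP[h1 h2].
  split=> // p pp; apply/negP => lt; apply: (negP h2); apply/existsP; exists p.
  by rewrite pp lt.
have wu : forall w m1 m2, (m1, w) \in M -> (m2, w) \in M -> m1 = m2.
  move=> w m1 m2; rewrite !inM => p1 p2.
  have [i1 n1] := nr _ _ p1; have [i2 n2] := nr _ _ p2.
  have := n1 _ p2; have := n2 _ p1; rewrite -!leqNgt => l1 l2.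
  by apply: (idx_inj i1 i2); apply/eqP; rewrite eqn_leq l1 l2.
split; first split.
- case=> m w; rewrite inM /= => pm; rewrite /acceptable.
  by case/andP: (pm) => -> _; rewrite (nr _ _ pm).1.
- split; last exact: wu.
  by move=> m w1 w2; rewrite !inM; exact: prop_uniq.
move=> m w [ac [hm hw]].
case/andP: (ac) => wm mw.
have lt : index w (mpref I m) < k m.
  case: hm => [nm|[w' [Mw' pr]]].
  - rewrite ltnNge; apply/negP => le.
    have ks : k m < size (mpref I m) by apply: leq_ltn_trans le _; rewrite index_mem.
    apply: nm; exists (nth w (mpref I m) (k m)); rewrite inM /proposes mem_nth //.
    by rewrite /= index_uniq //; case: wf => ->.
  - by move: Mw' pr; rewrite inM /mprefers => /andP[_ /eqP <-].
have [m' [pm' l']] := Hk _ _ wm lt mw.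
case: hw => [nw|[m'' [Mm'' pr]]].
- by apply: nw; exists m'; rewrite inM.
- have e := wu _ _ _ Mm'' (_ : (m', w) \in M); rewrite inM in e; have {}e := e pm'.
  subst m''; move: pr; rewrite /wprefers => pr.
  by have := ltn_trans pr l'; rewrite ltnn.
Qed.

Lemma GS : exists M, stable I M.
Proof.
suff H : forall n k, mu k <= n -> Inv k -> exists M, stable I M.
  by apply: (H (mu (fun _ => 0)) (fun _ => 0)) => // m w _; rewrite ltn0.
elim=> [|n IH] k mk Hk;
  (case: (boolP [exists r, exists w, rejw k r w]) => [/existsP[r /existsP[w rw]] | nr];
   [ | exists [set p | proposes k p.1 p.2]; apply: final => // r w;
       apply/negP => h; apply: (negP nr); apply/existsP; exists r; apply/existsP; exists w; exact: h ]).
- have := mu_step (proj1 (andP rw)); lia.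
- apply: (IH (kupd k r)); last exact: step_inv rw.
  have := mu_step (proj1 (andP rw)); lia.
Qed.
End GS.

Theorem mainTheorem7 (U W : finType) (I : SMI U W) (a : agent U W) :
  wf_SMI I ->
  forall a1 a2 : agent U W,
    ~ ma I a1 -> ma (del_agent I a) a1 ->
    ~ ma I a2 -> ma (del_agent I a) a2 ->
    a1 = a2.
Proof.
move=> wf a1 a2 n1 [M1 [st1 m1]] n2 [M2 [st2 m2]].
have [M stM] := GS wf.
have SAI := SA_stable stM.1 stM.2.
have SA1 := SA_stable st1.1 st1.2.
have SA2 := SA_stable st2.1 st2.2.
have HIJ := prefl_del I a.
have HJJ := prefl_del2 I a.
have sideI := @prefl_side U W I.
have sideJ := @prefl_side U W (del_agent I a).
have N1 : partner M a1 = None.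
  by case E: (partner M a1) => [y|] //; case: n1; exists M; split=> //; apply/(matched_partner stM.1); rewrite E.
have N2 : partner M a2 = None.
  by case E: (partner M a2) => [y|] //; case: n2; exists M; split=> //; apply/(matched_partner stM.1); rewrite E.
have S1 : partner M1 a1 <> None by apply/(matched_partner st1.1).
have S2 : partner M2 a2 <> None by apply/(matched_partner st2.1).
have emp : forall y, accL (prefl (del_agent I a)) a y = false.
  by move=> y; rewrite /accL prefl_del eqxx.
have S2' : partner M1 a2 <> None.
  move=> h; have [k [Vk ok wk]] := chain SA1 SA2 HJJ sideJ h S2.
  case: k Vk ok wk => [|k] Vk ok wk.
  - rewrite walk0 in wk; subst a2.
    case E: (partner M2 a) S2 => [y|] // _.
    by case: SA2 => _ /(_ _ _ E); rewrite emp.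
  - have := back (let: And3 h _ _ := SA1 in h) (let: And3 h _ _ := SA2 in h) Vk (ltnSn k).
    rewrite wk sel_even //.
    by move=> E; case: SA1 => _ /(_ _ _ E); rewrite emp.
have [k1 [V1 o1 w1]] := chain SAI SA1 HIJ sideI N1 S1.
have [k2 [V2 o2 w2]] := chain SAI SA1 HIJ sideI N2 S2'.
have sI := let: And3 h _ _ := SAI in h.
have s1 := let: And3 h _ _ := SA1 in h.
exact: (walk_uniq sI s1 V1 V2 o1 o2 w1 w2 N1 N2).
Qed.
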